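(* Let $X$ be a set and $d$ an ultra-semimetric on $X$. Let $E$ be the group of all finite subsets of $X$ with an even number of elements, with symmetric difference as the group operation (identify $x\in X$ with $\{x\}$, so that $x-y=x+y=\{x,y\}\triangle\emptyset$ for $x\neq y$). For $u\in E$ let $\mathrm{Conf}(u)$ be the set of finite families $\omega=\{(x_1,x_2),\dots,(x_{2n-1},x_{2n})\}$ of pairs of elements of $X$ with $\{x_1\}\triangle\{x_2\}\triangle\cdots\triangle\{x_{2n}\}=u$, and set $\varphi(\omega)=\max_{1\le i\le n}d(x_{2i-1},x_{2i})$ and $\|u\|=\inf_{\omega\in\mathrm{Conf}(u)}\varphi(\omega)$. Then: (i) for $u\neq 0$ the infimum is attained, and equals the minimum of $\varphi(\omega)$ over configurations $\omega$ in which all $2n$ entries are pairwise distinct; (ii) $\|\cdot\|$ is an ultra-seminorm on $E$, i.e. $\|0\|=0$, $\|u\|=\|-u\|\ge0$ and $\|u+v\|\le\max\{\|u\|,\|v\|\}$; (iii) $\|x-y\|=d(x,y)$ for all $x,y\in X$.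
   Context: An ultra-semimetric on $X$ is a function $d:X\times X\to[0,\infty)$ with $d(x,x)=0$, $d(x,y)=d(y,x)$ and $d(x,z)\le\max\{d(x,y),d(y,z)\}$. *)

(* Defs.v *)
From Stdlib Require Import Reals List Classical ClassicalEpsilon.
Import ListNotations.
Open Scope R_scope.

Set Implicit Arguments.
Section Defs.
Variable X : Type.

Definition set_eq (u v : X -> Prop) : Prop := forall z, u z <-> v z.
Definition set0 : X -> Prop := fun _ => False.
Definition single (x : X) : X -> Prop := fun z => z = x.
Definition symd (u v : X -> Prop) : X -> Prop :=
  fun z => (u z /\ ~ v z) \/ (~ u z /\ v z).
(* additive inverse in E (every element has order 2, so -u = u) *)
Definition Eopp (u : X -> Prop) : X -> Prop := u.

Definition is_E (u : X -> Prop) : Prop :=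
  exists l : list X, NoDup l /\ Nat.Even (length l) /\ forall z, u z <-> In z l.

Fixpoint sym_sum (l : list X) : X -> Prop :=
  match l with
  | [] => set0
  | x :: l' => symd (single x) (sym_sum l')
  end.

Definition entries (w : list (X * X)) : list X :=
  concat (map (fun p => [fst p; snd p]) w).

Definition Conf (u : X -> Prop) (w : list (X * X)) : Prop :=
  set_eq (sym_sum (entries w)) u.

Variable d : X -> X -> R.

Definition ultra_semimetric : Prop :=
  (forall x y, 0 <= d x y) /\ (forall x, d x x = 0) /\
  (forall x y, d x y = d y x) /\
  (forall x y z, d x z <= Rmax (d x y) (d y z)).

(* phi(omega) = max_i d(x_{2i-1}, x_{2i}); empty max = 0 (distances are >= 0) *)
Definition phi (w : list (X * X)) : R :=
  fold_right (fun p m => Rmax (d (fst p) (snd p)) m) 0 w.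

Definition is_glb (S : R -> Prop) (r : R) : Prop :=
  (forall a, S a -> r <= a) /\ (forall b, (forall a, S a -> b <= a) -> b <= r).

Definition norm (u : X -> Prop) : R :=
  epsilon (inhabits 0)
    (fun r => is_glb (fun a => exists w, Conf u w /\ a = phi w) r).

End Defs.

(* Main.v *)
Require Import Defs.
From Stdlib Require Import Reals List Permutation Classical ClassicalEpsilon Lia Lra.
Import ListNotations.
Open Scope R_scope.

Definition bt {X : Type} (d : X -> X -> R) (r : R) (x z : X) : bool :=
  if Rle_dec (d x z) r then true else false.

Definition par {X : Type} (d : X -> X -> R) (r : R) (x : X) (l : list X) : bool :=
  fold_right (fun z acc => xorb (bt d r x z) acc) false l.

Lemma par_app {X} d r x (l1 l2 : list X) :
  par d r x (l1 ++ l2) = xorb (par d r x l1) (par d r x l2).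
Proof.
  induction l1 as [|a l1 IH]; simpl. reflexivity.
  unfold par in *; simpl. rewrite IH. destruct (bt d r x a), (fold_right _ _ l1), (fold_right _ _ l2); reflexivity.
Qed.

Lemma par_perm {X} d r x (l1 l2 : list X) :
  Permutation l1 l2 -> par d r x l1 = par d r x l2.
Proof.
  induction 1; unfold par in *; simpl; try congruence.
  destruct (bt d r x x0), (bt d r x y), (fold_right _ _ l); reflexivity.
Qed.

Lemma sym_sum_nodup {X} (l : list X) : NoDup l -> forall z, sym_sum l z <-> In z l.
Proof.
  induction 1 as [|a l Hn Hd IH]; intro z; simpl. unfold set0; tauto.
  unfold symd, single. specialize (IH z).
  destruct (classic (z = a)) as [->|Hz]. tauto.
  split; intros H; intuition congruence.
Qed.

Lemma sym_sum_app {X} (l1 l2 : list X) z :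
  sym_sum (l1 ++ l2) z <-> symd (sym_sum l1) (sym_sum l2) z.
Proof.
  induction l1 as [|a l1 IH]; simpl. unfold symd, set0; tauto.
  unfold symd in *. rewrite IH.
  destruct (classic (single a z)), (classic (sym_sum l1 z)), (classic (sym_sum l2 z)); tauto.
Qed.

Lemma normalize {X} d (l : list X) : exists m, NoDup m /\ (forall z, sym_sum l z <-> In z m) /\
   forall r x, par d r x l = par d r x m.
Proof.
  induction l as [|a l IH]. exists []. split. constructor. split; simpl. unfold set0; tauto. auto.
  destruct IH as [m [Hm [Hmem Hpar]]].
  destruct (classic (In a m)) as [Ha|Ha].
  - destruct (in_split _ _ Ha) as [m1 [m2 ->]].
    exists (m1 ++ m2). split. eapply NoDup_remove_1; eauto.
    split.
    + intro z. simpl. unfold symd, single. rewrite Hmem.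
      pose proof (NoDup_remove_2 _ _ _ Hm).
      destruct (classic (z = a)) as [->|Hz]. tauto.
      rewrite !in_app_iff. simpl. intuition congruence.
    + intros r x. unfold par at 1. simpl. fold (par d r x l). rewrite Hpar, !par_app.
      unfold par; simpl. destruct (bt d r x a), (fold_right _ _ m1), (fold_right _ _ m2); reflexivity.
  - exists (a :: m). split. constructor; auto. split.
    + intro z. simpl. unfold symd, single. rewrite Hmem.
      destruct (classic (z = a)) as [->|Hz]. tauto. intuition congruence.
    + intros r x. unfold par; simpl. fold (par d r x l). fold (par d r x m). rewrite Hpar. reflexivity.
Qed.

Lemma par_inv {X} d (l1 l2 : list X) : (forall z, sym_sum l1 z <-> sym_sum l2 z) ->
  forall r x, par d r x l1 = par d r x l2.
Proof.
  intros H r x.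
  destruct (normalize d l1) as [m1 [N1 [M1 P1]]].
  destruct (normalize d l2) as [m2 [N2 [M2 P2]]].
  rewrite P1, P2. apply par_perm, NoDup_Permutation; auto.
  intro z. rewrite <- M1, <- M2. auto.
Qed.

Lemma bt_pair {X} (d : X -> X -> R) (hd : ultra_semimetric d) r x a b :
  d a b <= r -> bt d r x a = bt d r x b.
Proof.
  destruct hd as [H0 [H1 [H2 H3]]]. intros Hab. unfold bt.
  destruct (Rle_dec (d x a) r), (Rle_dec (d x b) r); auto; exfalso.
  - apply n. eapply Rle_trans. apply (H3 x a b). apply Rmax_lub; auto.
  - apply n. eapply Rle_trans. apply (H3 x b a). rewrite (H2 b a). apply Rmax_lub; auto.
Qed.

Lemma entries_cons {X} (p : X * X) w : entries (p :: w) = fst p :: snd p :: entries w.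
Proof. reflexivity. Qed.

Lemma par_entries {X} (d : X -> X -> R) (hd : ultra_semimetric d) r x w :
  (forall p, In p w -> d (fst p) (snd p) <= r) -> par d r x (entries w) = false.
Proof.
  induction w as [|p w IH]; intro H. reflexivity.
  rewrite entries_cons. unfold par; simpl. fold (par d r x (entries w)).
  rewrite IH by (intros; apply H; simpl; auto).
  rewrite (bt_pair _ hd _ x _ _ (H p (or_introl eq_refl))). destruct (bt d r x (snd p)); reflexivity.
Qed.

Lemma phi_ge {X} (d : X -> X -> R) w : 0 <= phi d w /\ forall p, In p w -> d (fst p) (snd p) <= phi d w.
Proof.
  induction w as [|q w [IH1 IH2]]; simpl. split. lra. tauto.
  split. eapply Rle_trans. apply IH1. apply Rmax_r.
  intros p [<-|Hp]. apply Rmax_l. eapply Rle_trans. apply IH2; auto. apply Rmax_r.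
Qed.

Lemma phi_le {X} (d : X -> X -> R) w r : 0 <= r -> (forall p, In p w -> d (fst p) (snd p) <= r) -> phi d w <= r.
Proof.
  induction w as [|q w IH]; simpl; intros H0 H. auto.
  apply Rmax_lub; auto.
Qed.

Lemma phi_in {X} (d : X -> X -> R) w : In (phi d w) (0 :: map (fun p => d (fst p) (snd p)) w).
Proof.
  induction w as [|q w IH]; simpl. auto.
  unfold Rmax. destruct (Rle_dec _ _). simpl in IH. destruct IH; auto. auto.
Qed.

Lemma par_true {X} d r x (t : list X) : par d r x t = true -> exists z, In z t /\ d x z <= r.
Proof.
  induction t as [|a t IH]; simpl. discriminate.
  unfold par; simpl. fold (par d r x t). unfold bt at 1.
  destruct (Rle_dec (d x a) r). intros _. exists a; auto.
  simpl. intro H. destruct (IH H) as [z [? ?]]. exists z; auto.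
Qed.

Lemma construct {X} (d : X -> X -> R) (hd : ultra_semimetric d) r (Hr : 0 <= r) :
  forall n (l : list X), (length l <= n)%nat -> NoDup l -> (forall a, In a l -> par d r a l = false) ->
  exists w, Permutation (entries w) l /\ forall p, In p w -> d (fst p) (snd p) <= r.
Proof.
  induction n as [|n IH]; intros l Hlen Hn Hp.
  - destruct l; simpl in Hlen; [|lia]. exists []. split. constructor. simpl; tauto.
  - destruct l as [|a t]. exists []. split. constructor. simpl; tauto.
    assert (Hpa := Hp a (or_introl eq_refl)).
    unfold par in Hpa; simpl in Hpa. fold (par d r a t) in Hpa.
    assert (bt d r a a = true). { unfold bt. destruct (Rle_dec _ _); auto. destruct hd as [_ [H1 _]]. rewrite H1 in n0. lra. }
    rewrite H in Hpa. destruct (par d r a t) eqn:E; [|discriminate].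
    destruct (par_true _ _ _ _ E) as [b0 [Hb Hab]].
    destruct (in_split _ _ Hb) as [t1 [t2 ->]].
    inversion Hn as [|? ? Hna Hnt]; subst.
    destruct (IH (t1 ++ t2)) as [w [Hw1 Hw2]].
    + rewrite length_app. simpl in Hlen. rewrite length_app in Hlen. simpl in Hlen. lia.
    + eapply NoDup_remove_1; eauto.
    + intros c Hc. assert (Hc' : In c (a :: t1 ++ b0 :: t2)). { right. apply in_app_iff in Hc. apply in_app_iff. simpl. tauto. }
      specialize (Hp c Hc'). unfold par in Hp; simpl in Hp. fold (par d r c (t1 ++ b0 :: t2)) in Hp.
      rewrite par_app in Hp. rewrite par_app.
      unfold par at 2 in Hp. simpl in Hp. fold (par d r c t2) in Hp.
      rewrite (bt_pair _ hd _ c _ _ Hab) in Hp.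
      destruct (bt d r c b0), (par d r c t1), (par d r c t2); simpl in *; congruence.
    + exists ((a, b0) :: w). split.
      * rewrite entries_cons. simpl. apply perm_skip.
        eapply Permutation_trans. apply perm_skip. apply Hw1. apply Permutation_middle.
      * intros p [<-|Hpw]; simpl; auto.
Qed.

Lemma finite_min (V : list R) (P : R -> Prop) : (exists v, In v V /\ P v) ->
  exists v, In v V /\ P v /\ forall v', In v' V -> P v' -> v <= v'.
Proof.
  induction V as [|a V IH]; intros [v [Hv Pv]]. destruct Hv.
  destruct (classic (exists v, In v V /\ P v)) as [Hex|Hno].
  - destruct (IH Hex) as [m [Hm [Pm Hmin]]].
    destruct (classic (P a)) as [Pa|Pa].
    + destruct (Rle_dec a m).
      * exists a. split. left; auto. split; auto. intros v' [<-|Hv'] Pv'. lra. specialize (Hmin v' Hv' Pv'). lra.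
      * exists m. split. right; auto. split; auto. intros v' [<-|Hv'] Pv'. lra. auto.
    + exists m. split. right; auto. split; auto. intros v' [<-|Hv'] Pv'. contradiction. auto.
  - destruct Hv as [<-|Hv]; [|exfalso; apply Hno; eauto].
    exists a. split. left; auto. split; auto. intros v' [<-|Hv'] Pv'. lra. exfalso; apply Hno; eauto.
Qed.

Lemma in_entries {X} (p : X * X) w : In p w -> In (fst p) (entries w) /\ In (snd p) (entries w).
Proof.
  induction w as [|q w IH]; [simpl; tauto|].
  rewrite entries_cons. intros [<-|H]; simpl; [tauto|]. specialize (IH H); tauto.
Qed.

Lemma glb_unique (S : R -> Prop) a b : is_glb S a -> is_glb S b -> a = b.
Proof.
  intros [A1 A2] [B1 B2]. apply Rle_antisym; auto.
Qed.

Lemma par_conf {X} (d : X -> X -> R) (hd : ultra_semimetric d) (u : X -> Prop) l w :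
  NoDup l -> (forall z, u z <-> In z l) -> Conf u w -> forall x, par d (phi d w) x l = false.
Proof.
  intros Hn Hu Hc x.
  rewrite (par_inv d l (entries w)).
  apply (par_entries _ hd); auto. apply phi_ge.
  intro z. rewrite sym_sum_nodup by auto. rewrite <- Hu. unfold Conf, set_eq in Hc. rewrite Hc. tauto.
Qed.

Lemma opt {X} (d : X -> X -> R) (hd : ultra_semimetric d) (u : X -> Prop) l w0 :
  NoDup l -> (forall z, u z <-> In z l) -> Conf u w0 ->
  exists ws, Permutation (entries ws) l /\ Conf u ws /\ NoDup (entries ws) /\
    norm d u = phi d ws /\ forall w, Conf u w -> phi d ws <= phi d w.
Proof.
  intros Hn Hu Hc0.
  assert (Key : forall w, Conf u w -> exists w', Permutation (entries w') l /\ phi d w' <= phi d w).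
  { intros w Hc. destruct (phi_ge d w) as [H0 _].
    destruct (construct _ hd _ H0 (length l) l (le_n _) Hn) as [w' [Hw1 Hw2]].
    { intros a _. eapply par_conf; eauto. }
    exists w'. split; auto. apply phi_le; auto. }
  assert (Good : forall w, Permutation (entries w) l -> Conf u w /\ NoDup (entries w)).
  { intros w Hp. assert (NoDup (entries w)). { eapply Permutation_NoDup. symmetry; eauto. auto. }
    split; auto. intro z. rewrite sym_sum_nodup by auto. rewrite Hu. split; apply Permutation_in; auto. symmetry; auto. }
  set (V := 0 :: map (fun p => d (fst p) (snd p)) (list_prod l l)).
  destruct (finite_min V (fun v => exists w, Permutation (entries w) l /\ phi d w = v)) as [m [Hm [[ws [Hws Hphi]] Hmin]]].
  { destruct (Key w0 Hc0) as [w' [Hw' _]]. exists (phi d w'). split; [|eauto].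
    pose proof (phi_in d w') as Hi. destruct Hi as [Hi|Hi]. rewrite <- Hi. left; auto. right.
    apply in_map_iff in Hi. destruct Hi as [p [Hp1 Hp2]]. apply in_map_iff. exists p. split; auto.
    destruct p as [a b]. destruct (in_entries _ _ Hp2) as [Ha Hb]. simpl in *.
    apply in_prod; eapply Permutation_in; eauto. }
  assert (Hlow : forall w, Conf u w -> phi d ws <= phi d w).
  { intros w Hc. destruct (Key w Hc) as [w' [Hw' Hle]]. rewrite Hphi. eapply Rle_trans; [|apply Hle].
    apply Hmin; [|eauto].
    pose proof (phi_in d w') as Hi. destruct Hi as [Hi|Hi]. rewrite <- Hi. left; auto. right.
    apply in_map_iff in Hi. destruct Hi as [p [Hp1 Hp2]]. apply in_map_iff. exists p. split; auto.
    destruct p as [a b]. destruct (in_entries _ _ Hp2) as [Ha Hb]. simpl in *.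
    apply in_prod; eapply Permutation_in; eauto. }
  destruct (Good ws Hws) as [Hcs Hns].
  exists ws. split; [auto|split; [auto|split; [auto|split; [|auto]]]].
  assert (G : is_glb (fun a => exists w, Conf u w /\ a = phi d w) (phi d ws)).
  { split. intros a [w [Hc ->]]. auto. intros b Hb. apply Hb. eauto. }
  unfold norm. apply (glb_unique (fun a => exists w, Conf u w /\ a = phi d w)); auto.
  apply epsilon_spec. eauto.
Qed.

Lemma even_conf {X} : forall n (l : list X), length l = (2 * n)%nat -> exists w, entries w = l.
Proof.
  induction n as [|n IH]; intros l H.
  - destruct l; [|simpl in H; lia]. exists []. reflexivity.
  - destruct l as [|a [|b l]]; simpl in H; try lia.
    destruct (IH l) as [w Hw]. lia. exists ((a,b)::w). rewrite entries_cons. simpl. congruence.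
Qed.

Lemma E_opt {X} (d : X -> X -> R) (hd : ultra_semimetric d) (u : X -> Prop) : is_E u ->
  exists ws, Conf u ws /\ NoDup (entries ws) /\
    norm d u = phi d ws /\ forall w, Conf u w -> phi d ws <= phi d w.
Proof.
  intros [l [Hn [[k Hk] Hu]]].
  destruct (even_conf k l Hk) as [w0 Hw0].
  destruct (opt _ hd u l w0) as [ws [_ H]]; auto.
  unfold Conf, set_eq. rewrite Hw0. intro z. rewrite sym_sum_nodup by auto. rewrite Hu. tauto.
  eauto.
Qed.

Theorem mainTheorem13 (X : Type) (d : X -> X -> R) (hd : ultra_semimetric d) :
  (* (i) *)
  (forall u : X -> Prop, is_E u -> ~ set_eq u (@set0 X) ->
     (exists w, Conf u w /\ phi d w = norm d u) /\
     (exists w, Conf u w /\ NoDup (entries w) /\ phi d w = norm d u /\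
        forall w', Conf u w' -> NoDup (entries w') -> phi d w <= phi d w')) /\
  (* (ii) *)
  (norm d (@set0 X) = 0 /\
   (forall u, is_E u -> norm d u = norm d (Eopp u) /\ 0 <= norm d u) /\
   (forall u v, is_E u -> is_E v ->
      norm d (symd u v) <= Rmax (norm d u) (norm d v))) /\
  (* (iii) *)
  (forall x y : X, norm d (symd (single x) (single y)) = d x y).
Proof.
  split; [|split; [split; [|split]|]].
  - intros u Hu _. destruct (E_opt _ hd _ Hu) as [ws [Hc [Hn [Hnm Hmin]]]].
    split; exists ws; [split; auto|]. split; [auto|split; [auto|split; auto]].
  - destruct (E_opt _ hd (@set0 X)) as [ws [Hc [Hn [Hnm Hmin]]]].
    exists []. split. constructor. split. exists 0%nat. reflexivity. intro z; simpl; unfold set0; tauto.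
    rewrite Hnm. apply Rle_antisym. apply (Hmin []). intro z. simpl; tauto.
    apply phi_ge.
  - intros u Hu. split. reflexivity.
    destruct (E_opt _ hd _ Hu) as [ws [_ [_ [-> _]]]]. apply phi_ge.
  - intros u v Hu Hv.
    destruct (E_opt _ hd _ Hu) as [w1 [Hc1 [_ [Hn1 _]]]].
    destruct (E_opt _ hd _ Hv) as [w2 [Hc2 [_ [Hn2 _]]]].
    assert (Hc : Conf (symd u v) (w1 ++ w2)).
    { intro z. unfold entries. rewrite map_app, concat_app. fold (entries w1). fold (entries w2).
      rewrite sym_sum_app. unfold symd. rewrite (Hc1 z), (Hc2 z). tauto. }
    destruct (normalize d (entries (w1 ++ w2))) as [m [Hm [Hmem _]]].
    destruct (opt _ hd (symd u v) m (w1 ++ w2)) as [ws [_ [_ [_ [Hnm Hmin]]]]]; auto.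
    { intro z. rewrite <- Hmem. symmetry. apply Hc. }
    rewrite Hnm, Hn1, Hn2. eapply Rle_trans. apply (Hmin _ Hc).
    apply phi_le. apply Rle_trans with (phi d w1). apply phi_ge. apply Rmax_l.
    intros p Hp. apply in_app_iff in Hp. destruct Hp as [Hp|Hp].
    eapply Rle_trans. apply (proj2 (phi_ge d w1)); auto. apply Rmax_l.
    eapply Rle_trans. apply (proj2 (phi_ge d w2)); auto. apply Rmax_r.
  - intros x y.
    destruct (classic (x = y)) as [<-|Hxy].
    + destruct (opt _ hd (symd (single x) (single x)) [] []) as [ws [Hp [_ [_ [Hnm _]]]]].
      constructor. intro z; unfold symd, single; simpl; tauto.
      intro z; unfold symd, single; simpl; unfold set0; tauto.
      rewrite Hnm. apply Permutation_sym, Permutation_nil in Hp. destruct ws as [|p ws]. simpl. destruct hd as [_ [H1 _]]. auto.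
      discriminate.
    + assert (Hn : NoDup [x; y]). { constructor. simpl; intuition. constructor. simpl; tauto. constructor. }
      assert (Hu : forall z, symd (single x) (single y) z <-> In z [x; y]).
      { intro z; unfold symd, single; simpl. intuition congruence. }
      assert (Hc0 : Conf (symd (single x) (single y)) [(x, y)]).
      { intro z. rewrite Hu. change (entries [(x,y)]) with [x; y]. apply sym_sum_nodup; auto. }
      destruct (opt _ hd _ _ _ Hn Hu Hc0) as [ws [_ [Hcs [_ [Hnm Hmin]]]]].
      rewrite Hnm. apply Rle_antisym.
      * eapply Rle_trans. apply (Hmin _ Hc0). simpl. apply Rmax_lub. lra. apply hd.
      * pose proof (par_conf _ hd _ _ _ Hn Hu Hcs x) as Hp.
        unfold par in Hp; simpl in Hp. unfold bt in Hp.
        destruct (Rle_dec (d x x) (phi d ws)) as [_|n]; [|exfalso; apply n; destruct hd as [_ [H1 _]]; rewrite H1; apply phi_ge].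
        destruct (Rle_dec (d x y) (phi d ws)); simpl in Hp; auto; discriminate.
Qed.
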